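(* Let $\mathcal D\subset\mathbb R^n$ be a symmetric dictionary of unit vectors and let $\|\cdot\|_{\mathcal A}$ be its atomic norm. Let $s\ge 1$ and let $S=\{x_{i_1},\dots,x_{i_s}\}\subset\mathcal D$ be $s$ atoms with pairwise coherence \[ \mu_S:=\max_{p\neq q}|\langle x_{i_p},x_{i_q}\rangle|<\frac{1}{s-1} \] (no condition if $s=1$). Let $y\in\mathrm{span}(S)$. Then for every $f\in\mathrm{span}(S)$ (in particular for every iterate $f=f_m$ of a method whose iterates lie in $\mathrm{span}(S)$), with $r=y-f$, \[ \|r\|_2\;\ge\;\frac{\sqrt{1-(s-1)\mu_S}}{\sqrt s}\,\bigl(\|y\|_{\mathcal A}-\|f\|_{\mathcal A}\bigr). \]
   Context: A dictionary $\mathcal D\subset\mathbb R^n$ is a set of unit vectors (Euclidean norm $\|\cdot\|_2$); it is symmetric if $g\in\mathcal D\Rightarrow -g\in\mathcal D$. The atomic norm of $\mathcal D$ is the Minkowski functional of $B=\mathrm{conv}(\mathcal D)$: $\|u\|_{\mathcal A}=\inf\{t>0: u\in tB\}$ (finite for $u\in\mathrm{span}(\mathcal D)$). *)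

(* Defs.v *)
From HB Require Import structures.
From mathcomp Require Import all_boot all_order all_algebra.
From mathcomp Require Import classical_sets reals.
Set Implicit Arguments. Unset Strict Implicit. Unset Printing Implicit Defensive.
Import Order.TTheory GRing.Theory Num.Theory.
Local Open Scope ring_scope.
Local Open Scope classical_set_scope.

Section Defs.
Variable R : realType.

Definition dotv (n : nat) (u v : 'rV[R]_n) : R := \sum_(i < n) u 0 i * v 0 i.
Definition norm2 (n : nat) (u : 'rV[R]_n) : R := Num.sqrt (dotv u u).

Definition unit_dictionary (n : nat) (D : set 'rV[R]_n) : Prop :=
  forall g, D g -> norm2 g = 1.
Definition symmetric_dictionary (n : nat) (D : set 'rV[R]_n) : Prop :=
  forall g, D g -> D (- g).

Definition in_conv (n : nat) (D : set 'rV[R]_n) (u : 'rV[R]_n) : Prop :=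
  exists (k : nat) (lam : 'I_k -> R) (g : 'I_k -> 'rV[R]_n),
    [/\ forall i, 0 <= lam i, \sum_(i < k) lam i = 1,
        forall i, D (g i) & u = \sum_(i < k) lam i *: g i].

Definition atomic_norm (n : nat) (D : set 'rV[R]_n) (u : 'rV[R]_n) : R :=
  inf [set t : R | 0 < t /\ exists b, in_conv D b /\ u = t *: b].

Definition coherence (n s : nat) (x : 'I_s -> 'rV[R]_n) : R :=
  \big[Num.max/0]_(p < s) \big[Num.max/0]_(q < s | q != p) `|dotv (x p) (x q)|.

Definition in_span (n s : nat) (x : 'I_s -> 'rV[R]_n) (y : 'rV[R]_n) : Prop :=
  exists c : 'I_s -> R, y = \sum_(p < s) c p *: x p.

End Defs.

(* Main.v *)
Require Import Defs.
From HB Require Import structures.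
From mathcomp Require Import all_boot all_order all_algebra.
From mathcomp Require Import classical_sets reals.
From mathcomp Require Import ring lra.
Import Order.TTheory GRing.Theory Num.Theory.
Local Open Scope ring_scope.
Local Open Scope classical_set_scope.
Set Implicit Arguments. Unset Strict Implicit.

Section Aux.
Variable R : realType.
Variable n : nat.
Implicit Types (D : set 'rV[R]_n).

Definition cone D (v : 'rV[R]_n) (w : R) : Prop :=
  exists (k : nat) (lam : 'I_k -> R) (g : 'I_k -> 'rV[R]_n),
    [/\ forall i, 0 <= lam i, \sum_(i < k) lam i = w,
        forall i, D (g i) & v = \sum_(i < k) lam i *: g i].

Lemma cone_eq D v v' w w' : v = v' -> w = w' -> cone D v w -> cone D v' w'.
Proof. by move=> -> ->. Qed.

Lemma cone0 D : cone D 0 0.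
Proof.
exists 0%N, (fun _ => 0), (fun _ => 0); split; try by case.
- by rewrite big_ord0.
- by rewrite big_ord0.
Qed.

Lemma split_lshift' m k (i : 'I_m) : split (lshift k i) = inl i.
Proof. exact: (unsplitK (inl _ i)). Qed.
Lemma split_rshift' m k (i : 'I_k) : split (rshift m i) = inr i.
Proof. exact: (unsplitK (inr _ i)). Qed.

Lemma coneD D v1 w1 v2 w2 : cone D v1 w1 -> cone D v2 w2 -> cone D (v1 + v2) (w1 + w2).
Proof.
move=> [k1 [l1 [g1 [hl1 hs1 hg1 hv1]]]] [k2 [l2 [g2 [hl2 hs2 hg2 hv2]]]].
exists (k1 + k2)%N,
  (fun i => match split i with inl j => l1 j | inr j => l2 j end),
  (fun i => match split i with inl j => g1 j | inr j => g2 j end); split.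
- by move=> i; case: (split i).
- rewrite big_split_ord -hs1 -hs2; congr (_ + _); apply: eq_bigr => j _.
    by rewrite split_lshift'.
  by rewrite split_rshift'.
- by move=> i; case: (split i).
- rewrite big_split_ord hv1 hv2; congr (_ + _); apply: eq_bigr => j _.
    by rewrite split_lshift'.
  by rewrite split_rshift'.
Qed.

Lemma coneZ D a v w : 0 <= a -> cone D v w -> cone D (a *: v) (a * w).
Proof.
move=> ha [k [l [g [hl hs hg hv]]]].
exists k, (fun i => a * l i), g; split => //.
- by move=> i; rewrite mulr_ge0.
- by rewrite -mulr_sumr hs.
- by rewrite hv scaler_sumr; apply: eq_bigr => i _; rewrite scalerA.
Qed.

Lemma cone1 D g : D g -> cone D g 1.
Proof.
move=> hg; exists 1%N, (fun _ => 1), (fun _ => g); split => //.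
- by rewrite big_ord1.
- by rewrite big_ord1 scale1r.
Qed.

Lemma coneS D g c : symmetric_dictionary D -> D g -> cone D (c *: g) `|c|.
Proof.
move=> hsym hg; have [c0|c0] := lerP 0 c.
  by rewrite ger0_norm //; have := coneZ c0 (cone1 hg); rewrite mulr1.
rewrite ltr0_norm //.
have := coneZ (a := - c) _ (cone1 (hsym _ hg)).
rewrite mulr1 scalerN scaleNr opprK; apply; rewrite oppr_ge0 ltW //.
Qed.

Lemma cone_sum D s (x : 'I_s -> 'rV[R]_n) (c : 'I_s -> R) :
  symmetric_dictionary D -> (forall p, D (x p)) ->
  cone D (\sum_(p < s) c p *: x p) (\sum_(p < s) `|c p|).
Proof.
move=> hsym hx; apply: (big_ind2 (fun v w => cone D v w)).
- exact: cone0.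
- by move=> ? ? ? ?; apply: coneD.
- by move=> p _; apply: coneS.
Qed.

Lemma cone_conv D v w : 0 < w -> cone D v w -> in_conv D (w^-1 *: v).
Proof.
move=> hw hc; have := coneZ (a := w^-1) _ hc.
rewrite mulVf ?gt_eqF //; move=> /(_ _) [|k [l [g [hl hs hg hv]]]].
  by rewrite invr_ge0 ltW.
by exists k, l, g; split.
Qed.

Lemma conv_cone D b : in_conv D b -> cone D b 1.
Proof. by move=> [k [l [g [hl hs hg hv]]]]; exists k, l, g. Qed.

Definition aset D u := [set t : R | 0 < t /\ exists b, in_conv D b /\ u = t *: b].

Lemma key D s (x : 'I_s -> 'rV[R]_n) (c : 'I_s -> R) x0 t b e :
  symmetric_dictionary D -> (forall p, D (x p)) -> D x0 ->
  0 <= t -> in_conv D b -> 0 < e ->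
  aset D (t *: b + \sum_(p < s) c p *: x p) (t + \sum_(p < s) `|c p| + e).
Proof.
move=> hsym hx hx0 ht hb he.
have hC : 0 <= \sum_(p < s) `|c p| by apply: sumr_ge0 => p _.
have hT : 0 < t + \sum_(p < s) `|c p| + e.
  by apply: ltr_pwDr => //; apply: addr_ge0.
split => //.
set T := t + _ + e.
have hc1 := coneZ ht (conv_cone hb).
have hc2 := cone_sum c hsym hx.
have he2 : 0 <= e / 2 by rewrite divr_ge0 // ltW.
have hc3 := coneD (coneZ he2 (cone1 hx0)) (coneZ he2 (cone1 (hsym _ hx0))).
have hc0 := coneD (coneD hc1 hc2) hc3.
have hc : cone D (t *: b + \sum_(p < s) c p *: x p) T.
  apply: (cone_eq _ _ hc0).
    by rewrite scalerN subrr addr0.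
  by rewrite /T !mulr1 [in RHS](splitr e) addrA.
exists (T^-1 *: (t *: b + \sum_(p < s) c p *: x p)); split.
  exact: cone_conv.
by rewrite scalerA mulfV ?gt_eqF // scale1r.
Qed.

Lemma aset_lb D u : has_lbound (aset D u).
Proof. by exists 0 => z [hz _]; apply: ltW. Qed.

Lemma atom_tri D s (x : 'I_s -> 'rV[R]_n) (cf c : 'I_s -> R) x0 :
  symmetric_dictionary D -> (forall p, D (x p)) -> D x0 ->
  atomic_norm D (\sum_(p < s) cf p *: x p + \sum_(p < s) c p *: x p)
  <= atomic_norm D (\sum_(p < s) cf p *: x p) + \sum_(p < s) `|c p|.
Proof.
move=> hsym hx hx0.
set f := \sum_(p < s) cf p *: x p.
have hx0c : in_conv D x0.
  by exists 1%N, (fun _ => 1), (fun _ => x0); split => //; rewrite big_ord1 // scale1r.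
have ne : nonempty (aset D f).
  have := key cf hsym hx hx0 (lexx 0) hx0c ltr01.
  by rewrite scale0r add0r => h; eexists; exact: h.
apply/ler_addgt0Pr => e he.
suff : atomic_norm D (f + \sum_(p < s) c p *: x p) - \sum_(p < s) `|c p| - e
   <= atomic_norm D f by lra.
apply: lb_le_inf => // t [ht [b [hb hf]]].
have := key c hsym hx hx0 (ltW ht) hb he; rewrite -hf => hT.
have := ge_inf (aset_lb D (f + \sum_(p < s) c p *: x p)) hT.
rewrite /atomic_norm -/(aset D _); lra.
Qed.

End Aux.


Section Quad.
Variable R : realType.

Lemma le_bigmax_seq (I : eqType) (r : seq I) (P : pred I) (F : I -> R) j :
  j \in r -> P j -> F j <= \big[Num.max/0]_(i <- r | P i) F i.
Proof.
idtac.
elim: r => [|a r IH] //=; rewrite in_cons big_cons => /orP [/eqP->|jr] Pj.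
  by rewrite Pj le_max lexx.
case: (P a); last exact: IH.
by rewrite le_max IH ?orbT.
Qed.

Lemma bigmax_ge0 (I : Type) (r : seq I) (P : pred I) (F : I -> R) :
  0 <= \big[Num.max/0]_(i <- r | P i) F i.
Proof.
apply: (big_rec (fun z => 0 <= z)) => // i z _ hz.
by rewrite le_max hz orbT.
Qed.

Variable n : nat.

Lemma coh_ge0 s (x : 'I_s -> 'rV[R]_n) : 0 <= coherence x.
Proof. exact: bigmax_ge0. Qed.

Lemma coh_le s (x : 'I_s -> 'rV[R]_n) p q : q != p ->
  `|dotv (x p) (x q)| <= coherence x.
Proof.
move=> hqp; rewrite /coherence.
have h1 : `|dotv (x p) (x q)| <= \big[Num.max/0]_(q0 < s | q0 != p) `|dotv (x p) (x q0)|.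
  exact: (@le_bigmax_seq _ _ (fun q0 => q0 != p) (fun q0 => `|dotv (x p) (x q0)|) q (mem_index_enum q)).
apply: le_trans h1 _.
exact: (@le_bigmax_seq _ _ xpredT (fun p => \big[Num.max/0]_(q0 < s | q0 != p) `|dotv (x p) (x q0)|) p (mem_index_enum p)).
Qed.

Lemma dot_sum s (x : 'I_s -> 'rV[R]_n) (c : 'I_s -> R) :
  dotv (\sum_(p < s) c p *: x p) (\sum_(p < s) c p *: x p)
  = \sum_(p < s) \sum_(q < s) c p * c q * dotv (x p) (x q).
Proof.
rewrite /dotv.
transitivity (\sum_(i < n) \sum_(p < s) \sum_(q < s)
   c p * c q * (x p 0 i * x q 0 i)).
  apply: eq_bigr => i _; rewrite !summxE big_distrl; apply: eq_bigr => p _.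
  rewrite big_distrr; apply: eq_bigr => q _; rewrite !mxE /=; ring.
rewrite exchange_big; apply: eq_bigr => p _.
rewrite exchange_big; apply: eq_bigr => q _; by rewrite mulr_sumr.
Qed.

Lemma sq_sum s (a : 'I_s -> R) :
  (\sum_(p < s) a p) ^+ 2 = \sum_(p < s) \sum_(q < s) a p * a q.
Proof.
rewrite expr2 big_distrl; apply: eq_bigr => p _; by rewrite big_distrr.
Qed.

Lemma sum_cst s (z : R) : \sum_(q < s) z = s%:R * z.
Proof. by rewrite sumr_const card_ord mulr_natl. Qed.

Lemma amgm (u v : R) : u * v <= u ^+ 2 / 2 + v ^+ 2 / 2.
Proof.
rewrite -subr_ge0.
have -> : u ^+ 2 / 2 + v ^+ 2 / 2 - u * v = (u - v) ^+ 2 / 2 by field.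
by rewrite divr_ge0 // sqr_ge0.
Qed.

Lemma cauchy s (c : 'I_s -> R) :
  (\sum_(p < s) `|c p|) ^+ 2 <= s%:R * \sum_(p < s) c p ^+ 2.
Proof.
rewrite sq_sum.
apply: (le_trans (y := \sum_(p < s) \sum_(q < s) (c p ^+ 2 / 2 + c q ^+ 2 / 2))).
  apply: ler_sum => p _; apply: ler_sum => q _.
  rewrite -(real_normK (num_real (c p))) -(real_normK (num_real (c q))).
  exact: amgm.
rewrite (eq_bigr (fun p => s%:R * (c p ^+ 2 / 2) + \sum_(q < s) c q ^+ 2 / 2)); last first.
  by move=> p _; rewrite big_split /= sum_cst.
rewrite big_split /= sum_cst -mulr_sumr -mulr_suml.
lra.
Qed.

Lemma quad_lb s (x : 'I_s -> 'rV[R]_n) (c : 'I_s -> R) mu :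
  (forall p, dotv (x p) (x p) = 1) ->
  (forall p q, q != p -> `|dotv (x p) (x q)| <= mu) -> 0 <= mu ->
  (1 + mu) * \sum_(p < s) c p ^+ 2 - mu * (\sum_(p < s) `|c p|) ^+ 2
  <= \sum_(p < s) \sum_(q < s) c p * c q * dotv (x p) (x q).
Proof.
move=> hd ho hmu.
apply: (le_trans (y := \sum_(p < s) \sum_(q < s)
   (- mu * (`|c p| * `|c q|) + (if q == p then (1 + mu) * c p ^+ 2 else 0)))).
  rewrite sq_sum.
  rewrite [X in _ <= X](eq_bigr (fun p => - mu * \sum_(q < s) `|c p| * `|c q| + (1 + mu) * c p ^+ 2)).
    by rewrite big_split /= -!mulr_sumr; lra.
  move=> p _; rewrite big_split /= -big_mkcond big_pred1_eq mulr_sumr //.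
apply: ler_sum => p _; apply: ler_sum => q _.
case: eqP => [->|/eqP hqp].
  rewrite hd mulr1 -(real_normK (num_real (c p))) expr2.
  set u := `|c p|; have -> : c p * c p = u * u.
    by rewrite /u -normrM ger0_norm // -expr2 sqr_ge0.
  lra.
rewrite addr0.
have h1 : - `|c p * c q * dotv (x p) (x q)| <= c p * c q * dotv (x p) (x q).
  by rewrite lerNl -normrN ler_norm.
have h2 : `|c p * c q * dotv (x p) (x q)| <= `|c p| * `|c q| * mu.
  rewrite !normrM; apply: ler_wpM2l; last exact: ho.
  by rewrite mulr_ge0.
lra.
Qed.

End Quad.

Unset Implicit Arguments. Set Strict Implicit.

Theorem mainTheorem2 (R : realType) (n : nat) (D : set 'rV[R]_n)
  (hunit : unit_dictionary D) (hsym : symmetric_dictionary D)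
  (s : nat) (x : 'I_s -> 'rV[R]_n)
  (hs : (1 <= s)%N) (hxD : forall p, D (x p))
  (hcoh : (1 < s)%N -> coherence x < ((s - 1)%:R)^-1)
  (y f : 'rV[R]_n) (hy : in_span x y) (hf : in_span x f) :
  Num.sqrt (1 - (s - 1)%:R * coherence x) / Num.sqrt (s%:R)
    * (atomic_norm D y - atomic_norm D f) <= norm2 (y - f).
Proof.
move: hy hf => [cy ->] [cf ->].
set mu := coherence x.
set c := fun p => cy p - cf p.
have hr : \sum_(p < s) cy p *: x p - \sum_(p < s) cf p *: x p
          = \sum_(p < s) c p *: x p.
  by rewrite -sumrB; apply: eq_bigr => p _; rewrite scalerBl.
have hy : \sum_(p < s) cy p *: x p
          = \sum_(p < s) cf p *: x p + \sum_(p < s) c p *: x p.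
  by rewrite -hr addrC subrK.
rewrite hr hy.
have x0 : 'I_s by exists 0%N.
have hmu0 : 0 <= mu := coh_ge0 x.
have hdiag : forall p, dotv (x p) (x p) = 1.
  move=> p; have h := hunit _ (hxD p); rewrite /norm2 in h.
  have hd : 0 <= dotv (x p) (x p).
    by apply: sumr_ge0 => i _; rewrite -expr2 sqr_ge0.
  by rewrite -(sqr_sqrtr hd) h expr1n.
have hs0 : 0 < s%:R :> R by rewrite ltr0n.
set a := 1 - (s - 1)%:R * mu.
have ha : 0 <= a.
  rewrite /a subr_ge0; case: (ltngtP s 1) => hs1.
  - by move: hs; rewrite leqNgt hs1.
  - have := hcoh hs1; have hp : 0 < (s - 1)%:R :> R by rewrite ltr0n subn_gt0.
    move=> h; apply: ltW; by rewrite -[X in _ < X](mulfV (lt0r_neq0 hp)) ltr_pM2l.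
  - by rewrite hs1 subnn mul0r ler01.
set C := \sum_(p < s) `|c p|.
have hC0 : 0 <= C by apply: sumr_ge0.
set K := Num.sqrt a / Num.sqrt s%:R.
have hK0 : 0 <= K by rewrite divr_ge0 ?sqrtr_ge0.
have step1 := atom_tri cf c hsym hxD (hxD x0).
apply: (le_trans (y := K * C)).
  apply: ler_wpM2l => //; move: step1; rewrite -/C; lra.
rewrite /norm2 dot_sum.
have hd0 : 0 <= \sum_(p < s) \sum_(q < s) c p * c q * dotv (x p) (x q).
  by rewrite -dot_sum; apply: sumr_ge0 => i _; rewrite -expr2 sqr_ge0.
rewrite -(ger0_norm (mulr_ge0 hK0 hC0)) -sqrtr_sqr ler_sqrt //.
have hq := quad_lb c hdiag (fun p q h => coh_le x h) hmu0.
have hcs := cauchy c.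
rewrite -/C in hq hcs.
set Q := \sum_(p < s) c p ^+ 2 in hq hcs.
apply: le_trans hq.
rewrite exprMn expr_div_n !sqr_sqrtr // ?ler0n //.
have -> : a / s%:R * C ^+ 2 = (1 + mu) * (C ^+ 2 / s%:R) - mu * C ^+ 2.
  rewrite /a natrB // ; field; by rewrite gt_eqF.
have : C ^+ 2 / s%:R <= Q by rewrite ler_pdivrMr // mulrC.
move=> h; rewrite lerD2r; apply: ler_wpM2l => //; lra.
Qed.
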